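(* Let $A=\{(\alpha,\beta)\in\mathbb R^2:(\beta-1)^2+4\alpha\beta\ge0,\ \beta<0,\ \alpha\le2\}$ and $\widetilde A=\{(\alpha,\beta)\in\mathbb R^2:\beta>0,\ \alpha\ge1\}$. If $(\alpha,\beta)\in A$, then for every $n\ge1$ the polynomial $P_n^{(\alpha,\beta)}$ has only real zeros. If $(\alpha,\beta)\in\widetilde A$, then for every integer $n$ with $1\le n\le\lceil\alpha\rceil$ the polynomial $P_n^{(\alpha,\beta)}$ has only real zeros, where $\lceil\alpha\rceil$ is the smallest integer $\ge\alpha$.
   Context: For real $\alpha,\beta$ with $\beta\neq0$, the polynomials $P_n^{(\alpha,\beta)}(x)$, $n\ge0$, are defined by $\sum_{n\ge0}P_n^{(\alpha,\beta)}(x)\frac{t^n}{n!}=(1-t)^{\alpha}\exp\big(x((1-t)^{\beta}-1)\big)$ (formal power series in $t$). A polynomial ''has only real zeros'' if all its complex zeros are real. *)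

(* Defs.v *)
From Stdlib Require Import Reals Arith ZArith.
Open Scope R_scope.

Definition fps := nat -> R.

Definition fps_mul (a b : fps) : fps :=
  fun n => sum_f_R0 (fun m => a m * b (n - m)%nat) n.

Definition fps_one : fps := fun n => match n with O => 1 | _ => 0 end.

Fixpoint fps_pow (a : fps) (k : nat) : fps :=
  match k with O => fps_one | S k' => fps_mul a (fps_pow a k') end.

Fixpoint falling (g : R) (n : nat) : R :=
  match n with O => 1 | S n' => falling g n' * (g - INR n') end.
Definition gbinom (g : R) (n : nat) : R := falling g n / INR (fact n).

Definition one_minus_t_pow (g : R) : fps := fun n => (-1) ^ n * gbinom g n.

(* u(t) = (1 - t)^beta - 1, a series with zero constant term *)
Definition u_ser (beta : R) : fps :=
  fun n => match n with O => 0 | _ => one_minus_t_pow beta n end.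

(* Coefficient of x^k t^n in exp(x u(t)) = sum_k x^k u(t)^k / k! *)
Definition exp_coef (beta : R) (k n : nat) : R := fps_pow (u_ser beta) k n / INR (fact k).

(* Coefficient of x^k t^n in (1-t)^alpha * exp(x ((1-t)^beta - 1)) *)
Definition gen_coef (alpha beta : R) (k n : nat) : R :=
  fps_mul (one_minus_t_pow alpha) (exp_coef beta k) n.

(* Coefficient of x^k in P_n^{(alpha,beta)}(x) = n! [t^n] of the generating function *)
Definition P_coef (alpha beta : R) (n k : nat) : R :=
  INR (fact n) * gen_coef alpha beta k n.

Definition C := (R * R)%type.
Definition Cadd (z w : C) : C := (fst z + fst w, snd z + snd w).
Definition Cmul (z w : C) : C :=
  (fst z * fst w - snd z * snd w, fst z * snd w + snd z * fst w).
Definition Cofr (r : R) : C := (r, 0).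
Definition C0 : C := (0, 0).
Fixpoint Cpow (z : C) (k : nat) : C :=
  match k with O => (1, 0) | S k' => Cmul z (Cpow z k') end.

Fixpoint Cpoly_eval (c : nat -> R) (d : nat) (z : C) : C :=
  match d with
  | O => Cmul (Cofr (c O)) (Cpow z O)
  | S d' => Cadd (Cpoly_eval c d' z) (Cmul (Cofr (c d)) (Cpow z d))
  end.

(* P_n^{(alpha,beta)} evaluated at z : C.  Its x^k-coefficient vanishes for k > n
   (u(t)^k has t-order >= k), so summing over k <= n gives the whole polynomial. *)
Definition P_eval (alpha beta : R) (n : nat) (z : C) : C :=
  Cpoly_eval (P_coef alpha beta n) n z.

Definition P_only_real_zeros (alpha beta : R) (n : nat) : Prop :=
  forall z : C, P_eval alpha beta n z = C0 -> snd z = 0.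

Definition Rceil (x : R) : Z := (- Int_part (- x))%Z.

(* Main.v *)
Require Import Defs.
From Stdlib Require Import Reals Lra Lia Factorial.
Open Scope R_scope.

Definition Lop (f : fps) : fps := fun n => INR (S n) * f (S n) - INR n * f n.

Lemma mul_ext_l f f' g n : (forall m, f m = f' m) -> fps_mul f g n = fps_mul f' g n.
Proof. intros H; unfold fps_mul; apply sum_eq; intros; now rewrite H. Qed.
Lemma mul_ext_r f g g' n : (forall m, g m = g' m) -> fps_mul f g n = fps_mul f g' n.
Proof. intros H; unfold fps_mul; apply sum_eq; intros; now rewrite H. Qed.
Lemma mul_add_l f g h n : fps_mul (fun m => f m + g m) h n = fps_mul f h n + fps_mul g h n.
Proof. unfold fps_mul; rewrite <- plus_sum; apply sum_eq; intros; ring. Qed.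
Lemma mul_add_r f g h n : fps_mul h (fun m => f m + g m) n = fps_mul h f n + fps_mul h g n.
Proof. unfold fps_mul; rewrite <- plus_sum; apply sum_eq; intros; ring. Qed.
Lemma mul_scal_l c f h n : fps_mul (fun m => c * f m) h n = c * fps_mul f h n.
Proof. unfold fps_mul; rewrite scal_sum; apply sum_eq; intros; ring. Qed.
Lemma mul_scal_r c f h n : fps_mul h (fun m => c * f m) n = c * fps_mul h f n.
Proof. unfold fps_mul; rewrite scal_sum; apply sum_eq; intros; ring. Qed.
Lemma mul_one_l f n : fps_mul fps_one f n = f n.
Proof.
  unfold fps_mul. destruct n as [|n]. simpl. ring.
  rewrite decomp_sum by lia. simpl.
  rewrite (sum_eq _ (fun _ => 0)). rewrite sum_cte. ring.
  intros; ring.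
Qed.
Lemma mul_one_r f n : fps_mul f fps_one n = f n.
Proof.
  unfold fps_mul. destruct n as [|n]. simpl. ring.
  rewrite tech5. rewrite Nat.sub_diag. change (fps_one 0%nat) with 1.
  rewrite (sum_eq _ (fun _ => 0)). rewrite sum_cte. ring.
  intros i Hi. replace (S n - i)%nat with (S (n - i)) by lia. simpl; ring.
Qed.

Lemma Lop_mul f g n :
  Lop (fps_mul f g) n = fps_mul (Lop f) g n + fps_mul f (Lop g) n.
Proof.
  unfold Lop, fps_mul.
  set (T := sum_f_R0 (fun m => f m * g (n - m)%nat) n).
  assert (E1 : sum_f_R0 (fun m => (INR (S m) * f (S m) - INR m * f m) * g (n - m)%nat) n
     = sum_f_R0 (fun m => INR (S m) * f (S m) * g (n - m)%nat) n
       - sum_f_R0 (fun m => INR m * f m * g (n - m)%nat) n).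
  { rewrite <- minus_sum. apply sum_eq; intros; ring. }
  assert (E2 : sum_f_R0 (fun m => f m * (INR (S (n - m)) * g (S (n - m)) - INR (n - m) * g (n - m)%nat)) n
     = sum_f_R0 (fun m => INR (S (n - m)) * f m * g (S (n - m))) n
       - sum_f_R0 (fun m => INR (n - m) * f m * g (n - m)%nat) n).
  { rewrite <- minus_sum. apply sum_eq; intros; ring. }
  rewrite E1, E2.
  assert (E3 : sum_f_R0 (fun m => INR m * f m * g (n - m)%nat) n
       + sum_f_R0 (fun m => INR (n - m) * f m * g (n - m)%nat) n = INR n * T).
  { unfold T; rewrite <- plus_sum, scal_sum. apply sum_eq; intros i Hi.
    rewrite minus_INR by lia. ring. }
  assert (E4 : sum_f_R0 (fun m => INR (S m) * f (S m) * g (n - m)%nat) n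
      + sum_f_R0 (fun m => INR (S (n - m)) * f m * g (S (n - m))) n
      = INR (S n) * sum_f_R0 (fun m => f m * g (S n - m)%nat) (S n)).
  { rewrite scal_sum.
    rewrite (decomp_sum _ (S n)) by lia.
    assert (A1 : sum_f_R0 (fun m => INR (S m) * f (S m) * g (n - m)%nat) n
      = sum_f_R0 (fun m => INR (S m) * (f (S m) * g (S n - S m)%nat)) n).
    { apply sum_eq; intros; simpl (S n - S i)%nat; ring. }
    assert (A2 : sum_f_R0 (fun m => INR (S (n - m)) * f m * g (S (n - m))) n
      = INR (S n) * (f 0%nat * g (S n - 0)%nat) +
        sum_f_R0 (fun m => INR (n - m) * (f (S m) * g (S n - S m)%nat)) n).
    { destruct n as [|k].
      - simpl. ring.
      - rewrite decomp_sum by lia.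
        rewrite (tech5 (fun m => INR (S k - m) * (f (S m) * g (S (S k) - S m)%nat)) k).
        rewrite Nat.sub_diag. simpl (INR 0).
        replace (S (S k) - 0)%nat with (S (S k)) by lia.
        replace (S (S k - 0)) with (S (S k)) by lia.
        simpl pred.
        assert (sum_f_R0 (fun i => INR (S (S k - S i)) * f (S i) * g (S (S k - S i))) k
                = sum_f_R0 (fun m => INR (S k - m) * (f (S m) * g (S (S k) - S m)%nat)) k).
        { apply sum_eq; intros i Hi. replace (S k - S i)%nat with (k - i)%nat by lia.
          replace (S k - i)%nat with (S (k - i)) by lia.
          replace (S (S k) - S i)%nat with (S (k - i)) by lia. ring. }
        lra. }
    rewrite A1, A2. simpl pred. replace (S n - 0)%nat with (S n) by lia.
    assert (sum_f_R0 (fun i => f (S i) * g (S n - S i)%nat * INR (S n)) n = sum_f_R0 (fun i => INR (S n) * (f (S i) * g (S n - S i)%nat)) n) by (apply sum_eq; intros; ring).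
    assert (sum_f_R0 (fun m => INR (S m) * (f (S m) * g (S n - S m)%nat)) n +
            sum_f_R0 (fun m => INR (n - m) * (f (S m) * g (S n - S m)%nat)) n =
            sum_f_R0 (fun i => INR (S n) * (f (S i) * g (S n - S i)%nat)) n).
    { rewrite <- plus_sum. apply sum_eq; intros i Hi. rewrite minus_INR by lia.
      rewrite !S_INR. ring. }
    lra. }
  rewrite <- E4, <- E3. ring.
Qed.

Lemma L_A g n : Lop (one_minus_t_pow g) n = - g * one_minus_t_pow g n.
Proof.
  unfold Lop, one_minus_t_pow, gbinom. simpl falling.
  rewrite fact_simpl, mult_INR. simpl pow.
  pose proof (INR_fact_neq_0 n).
  assert (INR (S n) <> 0) by (apply not_0_INR; lia).
  field; auto.
Qed.

Lemma L_U b n : Lop (u_ser b) n = - b * (u_ser b n + fps_one n).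
Proof.
  pose proof (L_A b n) as H. unfold Lop in *. unfold u_ser.
  destruct n as [|n].
  - simpl (INR 0) in *. unfold one_minus_t_pow, gbinom in *. simpl in *. field.
  - simpl fps_one. rewrite H. ring.
Qed.

Lemma L_one n : Lop fps_one n = 0.
Proof. unfold Lop; destruct n; simpl; ring. Qed.

Lemma L_pow b k n : Lop (fps_pow (u_ser b) k) n =
  - b * INR k * (fps_pow (u_ser b) k n + fps_pow (u_ser b) (pred k) n).
Proof.
  revert n; induction k as [|k IH]; intro n.
  - simpl fps_pow. rewrite L_one. simpl. ring.
  - change (fps_pow (u_ser b) (S k)) with (fps_mul (u_ser b) (fps_pow (u_ser b) k)).
    rewrite Lop_mul.
    rewrite (mul_ext_l _ (fun m => (-b) * (u_ser b m + fps_one m))) by (intro; apply L_U).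
    rewrite mul_scal_l, mul_add_l, mul_one_l.
    rewrite (mul_ext_r _ (Lop (fps_pow (u_ser b) k)) (fun m => (-b * INR k) * (fps_pow (u_ser b) k m + fps_pow (u_ser b) (pred k) m)))
      by (intro; rewrite IH; ring).
    rewrite mul_scal_r, mul_add_r.
    destruct k as [|k].
    + simpl (INR 0). simpl pred. rewrite S_INR. simpl (INR 0).
      change (fps_mul (u_ser b) (fps_pow (u_ser b) 0) n) with (fps_pow (u_ser b) 1 n). ring.
    + simpl pred.
      change (fps_mul (u_ser b) (fps_pow (u_ser b) k) n) with (fps_pow (u_ser b) (S k) n).
      change (fps_mul (u_ser b) (fps_pow (u_ser b) (S k)) n) with (fps_pow (u_ser b) (S (S k)) n).
      rewrite (S_INR (S k)). ring.
Qed.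

Definition Fk (a b : R) (k n : nat) : R := fps_mul (one_minus_t_pow a) (fps_pow (u_ser b) k) n.

Lemma L_F a b k n : Lop (Fk a b k) n =
  - (a + b * INR k) * Fk a b k n - b * INR k * Fk a b (pred k) n.
Proof.
  unfold Fk at 1. rewrite Lop_mul.
  rewrite (mul_ext_l _ (fun m => (-a) * one_minus_t_pow a m)) by (intro; apply L_A).
  rewrite mul_scal_l.
  rewrite (mul_ext_r _ (Lop (fps_pow (u_ser b) k)) (fun m => (-b * INR k) * (fps_pow (u_ser b) k m + fps_pow (u_ser b) (pred k) m)))
      by (intro; rewrite L_pow; ring).
  rewrite mul_scal_r, mul_add_r. unfold Fk. ring.
Qed.

Lemma pow_vanish b k n : (n < k)%nat -> fps_pow (u_ser b) k n = 0.
Proof.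
  revert n; induction k as [|k IH]; intros n Hn; [lia|].
  simpl fps_pow. unfold fps_mul.
  rewrite (sum_eq _ (fun _ => 0)). rewrite sum_cte; ring.
  intros i Hi. destruct i as [|i].
  - simpl. ring.
  - rewrite IH by lia. ring.
Qed.

Lemma F_vanish a b k n : (n < k)%nat -> Fk a b k n = 0.
Proof.
  intro Hn. unfold Fk, fps_mul.
  rewrite (sum_eq _ (fun _ => 0)). rewrite sum_cte; ring.
  intros i Hi. rewrite pow_vanish by lia. ring.
Qed.

Lemma P_coefE a b n k : P_coef a b n k = INR (fact n) * Fk a b k n / INR (fact k).
Proof.
  unfold P_coef, gen_coef, exp_coef.
  rewrite (mul_ext_r _ _ (fun m => / INR (fact k) * fps_pow (u_ser b) k m))
    by (intro; unfold Rdiv; ring).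
  rewrite mul_scal_r. unfold Fk, Rdiv. ring.
Qed.

Lemma F_succ a b k n : Fk a b k (S n) =
  ((INR n - a - b * INR k) * Fk a b k n - b * INR k * Fk a b (pred k) n) / INR (S n).
Proof.
  pose proof (L_F a b k n) as H. unfold Lop in H.
  assert (INR (S n) <> 0) by (apply not_0_INR; lia).
  apply (Rmult_eq_reg_l (INR (S n))); auto.
  field_simplify; auto. lra.
Qed.

Lemma P_vanish a b n k : (n < k)%nat -> P_coef a b n k = 0.
Proof. intro H; rewrite P_coefE, F_vanish by lia. unfold Rdiv; ring. Qed.

Lemma P_00 a b : P_coef a b 0 0 = 1.
Proof.
  rewrite P_coefE. unfold Fk, fps_mul. simpl. unfold one_minus_t_pow, gbinom. simpl. field.
Qed.

Lemma P_rec0 a b n : P_coef a b (S n) 0 = (INR n - a) * P_coef a b n 0.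
Proof.
  rewrite !P_coefE, F_succ. rewrite fact_simpl, mult_INR. simpl (INR 0).
  pose proof (INR_fact_neq_0 n).
  assert (INR (S n) <> 0) by (apply not_0_INR; lia).
  simpl (fact 0). simpl (INR 1). field; auto.
Qed.

Lemma P_recS a b n k : P_coef a b (S n) (S k) =
  (INR n - a - b * INR (S k)) * P_coef a b n (S k) - b * P_coef a b n k.
Proof.
  rewrite !P_coefE, F_succ. rewrite fact_simpl, mult_INR. simpl pred.
  rewrite (fact_simpl k), mult_INR.
  pose proof (INR_fact_neq_0 n). pose proof (INR_fact_neq_0 k).
  assert (INR (S n) <> 0) by (apply not_0_INR; lia).
  assert (INR (S k) <> 0) by (apply not_0_INR; lia).
  field; auto.
Qed.

Lemma Rceil_bound a N : (Z.of_nat N <= Rceil a)%Z -> forall m, (m < N)%nat -> INR m < a.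
Proof.
  intros H m Hm. unfold Rceil, Int_part in H.
  destruct (archimed (- a)) as [H1 H2].
  assert (Z.of_nat N <= 1 - up (- a))%Z by lia.
  apply IZR_le in H0. rewrite minus_IZR in H0.
  assert (INR (S m) <= INR N) by (apply le_INR; lia).
  rewrite INR_IZR_INZ with (n := N) in H3. rewrite S_INR in H3.
  simpl in H0. lra.
Qed.

From Stdlib Require Import Reals.
From HB Require Import structures.
From mathcomp Require Import all_boot all_order all_algebra.
From mathcomp Require Import Rstruct complex.
From mathcomp Require Import ring lra.
Import Order.TTheory GRing.Theory Num.Theory.
Local Open Scope ring_scope.
Local Open Scope complex_scope.
Notation RC := Rdefinitions.R.
Notation cRe := (@complex.Re RC).
Notation cIm := (@complex.Im RC).
Lemma ReM (x y : RC[i]) : cRe (x * y) = cRe x * cRe y - cIm x * cIm y.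
Proof. by case: x => a b; case: y => c d. Qed.
Lemma ImM (x y : RC[i]) : cIm (x * y) = cRe x * cIm y + cIm x * cRe y.
Proof. by case: x => a b; case: y => c d. Qed.
Lemma ReD (x y : RC[i]) : cRe (x + y) = cRe x + cRe y.
Proof. by case: x => a b; case: y => c d. Qed.
Lemma ImD (x y : RC[i]) : cIm (x + y) = cIm x + cIm y.
Proof. by case: x => a b; case: y => c d. Qed.
Lemma ReB (x y : RC[i]) : cRe (x - y) = cRe x - cRe y.
Proof. by case: x => a b; case: y => c d. Qed.
Lemma ImB (x y : RC[i]) : cIm (x - y) = cIm x - cIm y.
Proof. by case: x => a b; case: y => c d. Qed.
Lemma ReJ (x : RC[i]) : cRe (x^*) = cRe x. Proof. by case: x. Qed.
Lemma ImJ (x : RC[i]) : cIm (x^*) = - cIm x. Proof. by case: x. Qed.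
Lemma ReC (r : RC) : cRe (r%:C) = r. Proof. by []. Qed.
Lemma ImC (r : RC) : cIm (r%:C) = 0. Proof. by []. Qed.
Lemma Re1 : cRe (1 : RC[i]) = 1. Proof. by []. Qed.
Lemma Im1 : cIm (1 : RC[i]) = 0. Proof. by []. Qed.
Lemma sqr_gt0 (x : RC) : x != 0 -> 0 < x ^+ 2.
Proof. by move=> h; rewrite lt0r sqrf_eq0 h sqr_ge0. Qed.

Lemma cneq0 (u : RC[i]) : u != 0 -> 0 < cRe u ^+ 2 + cIm u ^+ 2.
Proof.
case: u => u1 u2 /= Hu.
have [h1|h1] := eqVneq u1 0.
  have [h2|h2] := eqVneq u2 0; first by move: Hu; rewrite h1 h2 eqxx.
  have := @sqr_gt0 u2 h2; have := sqr_ge0 u1; lra.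
have := @sqr_gt0 u1 h1; have := sqr_ge0 u2; lra.
Qed.

Lemma ReN (x : RC[i]) : cRe (- x) = - cRe x. Proof. by case: x. Qed.
Lemma ImN (x : RC[i]) : cIm (- x) = - cIm x. Proof. by case: x. Qed.
Definition Cim_rules := (ReM, ImM, ReD, ImD, ReB, ImB, ReJ, ImJ, ReC, ImC, Re1, Im1, ReN, ImN).

Lemma keyK (s : seq RC[i]) (c z : RC[i]) : all (fun r => cIm r == 0) s ->
  let P := c *: \prod_(r <- s) ('X - r%:P) in
  exists K : RC, 0 <= K /\ cIm ((P^`()).[z] * (P.[z])^*) = - cIm z * K /\
     (P.[z] != 0 -> s != [::] -> 0 < K).
Proof.
elim: s => [|r s IH] /=.
  move=> _; exists 0; split => //; split => //.
  by rewrite big_nil alg_polyC derivC horner0 mul0r mulr0.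
move=> /andP [/eqP Hr Hs].
have [K' [HK'0 [HK' _]]] := IH Hs.
set P' := c *: \prod_(r <- s) ('X - r%:P) in HK'.
have EP : c *: \prod_(j <- r :: s) ('X - j%:P) = ('X - r%:P) * P'.
  by rewrite big_cons scalerAr.
rewrite EP derivM derivXsubC mul1r hornerD !hornerM hornerXsubC.
set u := P'.[z] in HK' *; set v := (P'^`()).[z] in HK' *.
exists ((cRe u ^+ 2 + cIm u ^+ 2) + ((cRe z - cRe r) ^+ 2 + cIm z ^+ 2) * K').
split.
  apply: addr_ge0; first by apply: addr_ge0; apply: sqr_ge0.
  by apply: mulr_ge0 => //; apply: addr_ge0; apply: sqr_ge0.
split.
  move: HK'. rewrite rmorphM /= !Cim_rules ?Hr => HK'.
  rewrite [RHS](_ : _ = - cIm z * (cRe u ^+ 2 + cIm u ^+ 2) + ((cRe z - cRe r) ^+ 2 + cIm z ^+ 2) * (- cIm z * K')); last by ring.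
  rewrite -HK'. ring.
move=> Hnz _.
apply: ltr_pwDl; last by apply: mulr_ge0 => //; apply: addr_ge0; apply: sqr_ge0.
apply: cneq0. apply: contraNneq Hnz => ->. by rewrite mulr0.
Qed.

Notation toC := (real_complex RC).
Definition RR (p : {poly RC}) : Prop :=
  p != 0 /\ forall z : RC[i], root (map_poly toC p) z -> cIm z = 0.

Lemma map_toC_eq0 (p : {poly RC}) : (map_poly toC p == 0) = (p == 0).
Proof. by rewrite map_poly_eq0. Qed.

Lemma step_noroot (p : {poly RC}) (a : RC) : RR p -> 0 <= a ->
  forall z : RC[i], cIm z != 0 ->
  (map_poly toC ('X * p^`() + ('X + a%:P) * p)).[z] != 0.
Proof.
move=> [pn0 Hp] Ha z Hz.
set P := map_poly toC p.
have [rs hP] := closed_field_poly_normal P.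
have lc0 : lead_coef P != 0 by rewrite lead_coef_eq0 map_toC_eq0.
have Hrs : all (fun r => cIm r == 0) rs.
  apply/allP => r Hr; apply/eqP; apply: Hp.
  rewrite -/P hP /root hornerZ mulf_eq0 -/(root _ r) root_prod_XsubC Hr orbT //.
have HPz : P.[z] != 0.
  apply: contra Hz => Hr. apply/eqP; apply: Hp. exact: Hr.
have [K [HK0 [HK HKpos]]] := keyK rs (lead_coef P) z Hrs.
rewrite -hP in HK HKpos.
rewrite rmorphD !rmorphM /= map_polyX rmorphD /= map_polyX map_polyC /= -deriv_map -/P.
rewrite hornerD !hornerM hornerD hornerX hornerC.
set u := P.[z] in HK HKpos HPz *; set v := (P^`()).[z] in HK *.
apply/negP => /eqP EQ.
have E1 : cRe (z * v + (z + a%:C) * u) = 0 by rewrite EQ.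
have E2 : cIm (z * v + (z + a%:C) * u) = 0 by rewrite EQ.
move: E1 E2 HK; rewrite !Cim_rules ?addr0 => E1 E2 HK.
have Hu := @cneq0 u HPz.
have Hy : 0 < cIm z ^+ 2 by apply: (@sqr_gt0 (cIm z)).
have ID : cIm z * ((cRe z ^+ 2 + cIm z ^+ 2) * K + a * (cRe u ^+ 2 + cIm u ^+ 2)) = 0.
  rewrite [LHS](_ : _ = - ((cRe z ^+ 2 + cIm z ^+ 2) * (- cIm z * K)) + cIm z * a * (cRe u ^+ 2 + cIm u ^+ 2)); last by ring.
  rewrite -HK.
  rewrite [RHS](_ : 0 = - ((cRe z * cRe v - cIm z * cIm v + ((cRe z + a) * cRe u - cIm z * cIm u))
      * (- (cRe u * cIm z + cIm u * cRe z)) + (cRe z * cIm v + cIm z * cRe v + ((cRe z + a) * cIm u + cIm z * cRe u)) * (cRe u * cRe z - cIm u * cIm z))).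
    by ring.
  by rewrite E1 E2; ring.
have ID2 : (cRe z ^+ 2 + cIm z ^+ 2) * K + a * (cRe u ^+ 2 + cIm u ^+ 2) = 0.
  by move/eqP: ID; rewrite mulf_eq0 (negbTE Hz) /= => /eqP.
case: rs hP Hrs HKpos => [|r rs] hP _ HKpos.
  have Hv : v = 0.
    by rewrite /v hP big_nil alg_polyC derivC horner0.
  have Hv1 : cRe v = 0 by rewrite Hv.
  have Hv2 : cIm v = 0 by rewrite Hv.
  have : cIm z * (cRe u ^+ 2 + cIm u ^+ 2) = 0.
    rewrite [LHS](_ : _ = - (cIm u * (cRe z * cRe v - cIm z * cIm v + ((cRe z + a) * cRe u - cIm z * cIm u))
       - cRe u * (cRe z * cIm v + cIm z * cRe v + ((cRe z + a) * cIm u + cIm z * cRe u)))); last by rewrite Hv1 Hv2; ring.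
    by rewrite E1 E2; ring.
  move/eqP; rewrite mulf_eq0 (negbTE Hz) /= => /eqP Hu0.
  by move: Hu; rewrite Hu0 ltxx.
have HKp := HKpos HPz isT.
have h1 : 0 < (cRe z ^+ 2 + cIm z ^+ 2) * K.
  by apply: mulr_gt0 => //; have := sqr_ge0 (cRe z); lra.
have h2 : 0 <= a * (cRe u ^+ 2 + cIm u ^+ 2) by apply: mulr_ge0 => //; apply: ltW.
have : 0 < (cRe z ^+ 2 + cIm z ^+ 2) * K + a * (cRe u ^+ 2 + cIm u ^+ 2) by lra.
by rewrite ID2 ltxx.
Qed.

Lemma step_RR (p : {poly RC}) (a : RC) : RR p -> 0 <= a ->
  RR ('X * p^`() + ('X + a%:P) * p).
Proof.
move=> Hp Ha; have H := @step_noroot p a Hp Ha.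
split.
  apply/negP => /eqP E.
  have Hi : cIm 'i%C != 0 by rewrite /= oner_neq0.
  have := H 'i%C Hi. by rewrite E rmorph0 horner0 eqxx.
move=> z Hz; apply/eqP; apply/negPn; apply/negP => Hi.
by move: (H z Hi); rewrite -/(root _ z) Hz.
Qed.

Lemma RR_scale (p : {poly RC}) (c : RC) : c != 0 -> RR p -> RR (c *: p).
Proof.
move=> c0 [pn0 Hp]; split; first by rewrite scaler_eq0 negb_or c0 pn0.
move=> z; rewrite linearZ /= /root hornerZ mulf_eq0 => /orP [|Hz]; last exact: Hp.
move=> /eqP h; exfalso; move: c0; rewrite -(@complexI RC c 0).
  by rewrite eqxx.
by rewrite h.
Qed.

Lemma RR_1 : RR 1.
Proof.
split; first exact: oner_neq0.
by move=> z; rewrite rmorph1 /root hornerC oner_eq0.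
Qed.

Lemma RR_quad (p : {poly RC}) : (size p <= 3)%N ->
  (p`_2 != 0) || (p`_1 != 0) -> 0 <= p`_1 ^+ 2 - 4 * p`_0 * p`_2 -> RR p.
Proof.
move=> Hs Hc Hd; split.
  apply/negP => /eqP E; move: Hc; by rewrite E !coef0 eqxx.
move=> z Hz.
have Hs' : (size (map_poly toC p) <= 3)%N by rewrite size_map_poly.
move: Hz; rewrite /root (horner_coef_wide _ Hs') !big_ord_recl big_ord0 !coef_map /=.
rewrite expr0 expr1 expr2 => /eqP E.
have E1 : cRe (toC p`_0 * 1 + (toC p`_1 * z + (toC p`_2 * (z * z) + 0))) = 0 by rewrite E.
have E2 : cIm (toC p`_0 * 1 + (toC p`_1 * z + (toC p`_2 * (z * z) + 0))) = 0 by rewrite E.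
move: E1 E2; rewrite !Cim_rules /= ?mul0r ?mulr0 ?mulr1 ?subr0 ?addr0 ?add0r => E1 E2.
apply/eqP; apply/negPn; apply/negP => Hy.
have Hy2 := @sqr_gt0 _ Hy.
have E2' : p`_1 + 2 * p`_2 * cRe z = 0.
  apply/eqP; rewrite -(mulIr_eq0 _ (rregP Hy)); apply/eqP.
  rewrite -[RHS]E2; ring.
have [h2|h2] := eqVneq p`_2 0.
  move: Hc E2'; rewrite h2 eqxx /= ?mulr0 ?mul0r ?addr0 => /eqP Hc E2'. by apply: Hc.
have ID : p`_1 ^+ 2 - 4 * p`_0 * p`_2 + 4 * p`_2 ^+ 2 * cIm z ^+ 2 =
   - 4 * p`_2 * (p`_0 + (p`_1 * cRe z + p`_2 * (cRe z * cRe z - cIm z * cIm z)))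
   + (p`_1 + 2 * p`_2 * cRe z) ^+ 2 by ring.
rewrite E1 E2' mulr0 expr0n /= add0r in ID.
have h22 := @sqr_gt0 _ h2.
have : 0 < 4 * p`_2 ^+ 2 * cIm z ^+ 2 by apply: mulr_gt0 => //; apply: mulr_gt0.
lra.
Qed.


Definition pol (a b : RC) (n : nat) : {poly RC} := \poly_(k < n.+1) P_coef a b n k.

Lemma coef_pol a b n k : (pol a b n)`_k = P_coef a b n k.
Proof.
rewrite coef_poly; case: ltnP => // h; rewrite P_vanish //; exact/ssrnat.ltP.
Qed.

Lemma pol_rec a b n : b != 0 -> pol a b n.+1 =
  (-b) *: ('X * (pol a b n)^`() + ('X + ((a - n%:R) / b)%:P) * pol a b n).
Proof.
move=> b0; apply/polyP => k.
rewrite coefZ coefD coefXM mulrDl coefD coefXM coefCM !coef_pol.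
case: k => [|k] /=.
  rewrite P_rec0 !RealsE ?INRE. field. exact: b0.
rewrite coef_deriv !coef_pol P_recS !RealsE ?INRE -mulr_natr. field. exact: b0.
Qed.

Definition toW (z : Defs.C) : RC[i] := Complex (fst z) (snd z).

Lemma Cpow_eq (z : Defs.C) k : Cpow z k = (cRe (toW z ^+ k), cIm (toW z ^+ k)).
Proof.
elim: k => [|k IH] /=; first by [].
rewrite IH exprS ReM ImM. reflexivity.
Qed.

Lemma Cpoly_eq (c : nat -> RC) d (z : Defs.C) :
  Cpoly_eval c d z = (cRe (\sum_(k < d.+1) toC (c k) * toW z ^+ k),
                      cIm (\sum_(k < d.+1) toC (c k) * toW z ^+ k)).
Proof.
elim: d => [|d IH].
  rewrite big_ord1 /=. reflexivity.
change (Cpoly_eval c d.+1 z) with (Cadd (Cpoly_eval c d z) (Cmul (Cofr (c d.+1)) (Cpow z d.+1))).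
rewrite big_ord_recr IH Cpow_eq ReD ImD ReM ImM. reflexivity.
Qed.

Lemma P_eval_eq a b n z : P_eval a b n z =
  (cRe (map_poly toC (pol a b n)).[toW z], cIm (map_poly toC (pol a b n)).[toW z]).
Proof.
have Hs : (size (map_poly toC (pol a b n)) <= n.+1)%N.
  by rewrite size_map_poly; apply: size_poly.
rewrite (horner_coef_wide _ Hs) /P_eval Cpoly_eq.
by congr pair; congr (_ _); apply: eq_bigr => i _; rewrite coef_map coef_pol.
Qed.

Lemma RR_only_real a b n : RR (pol a b n) -> P_only_real_zeros a b n.
Proof.
move=> [_ H] z; rewrite P_eval_eq /C0 => [[E1 E2]].
have : root (map_poly toC (pol a b n)) (toW z).
  apply/eqP; move: E1 E2; case: (_.[_]) => x y /= -> -> //.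
by move/H.
Qed.

Lemma P10 a b : P_coef a b 1 0 = - a.
Proof. rewrite P_rec0 P_00 !RealsE /=. ring. Qed.
Lemma P11 a b : P_coef a b 1 1 = - b.
Proof. rewrite P_recS P_00 P_vanish //= !RealsE. ring. Qed.
Lemma P12 a b : P_coef a b 1 2 = 0.
Proof. by rewrite P_vanish. Qed.
Lemma P20 a b : P_coef a b 2 0 = (1 - a) * (- a).
Proof. rewrite P_rec0 P10 !RealsE ?INRE. ring. Qed.
Lemma P21 a b : P_coef a b 2 1 = (1 - a - b) * (- b) - b * (- a).
Proof. rewrite P_recS P10 P11 !RealsE ?INRE. ring. Qed.
Lemma P22 a b : P_coef a b 2 2 = b ^+ 2.
Proof. rewrite P_recS P11 P12 !RealsE ?INRE. ring. Qed.

Lemma part1 a b : 0 <= (b - 1) ^+ 2 + 4 * a * b -> b < 0 -> a <= 2 ->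
  forall n, (0 < n)%N -> RR (pol a b n).
Proof.
move=> Hd Hb Ha n; case: n => [|[|m]] // _.
  apply: RR_quad.
  - exact: leq_trans (size_poly _ _) _.
  - by rewrite !coef_pol P12 P11 eqxx /= oppr_eq0 (lt_eqF Hb).
  - rewrite !coef_pol P12 mulr0 subr0; exact: sqr_ge0.
elim: m => [|m IH].
  apply: RR_quad.
  - exact: leq_trans (size_poly _ _) _.
  - by rewrite !coef_pol P22 sqrf_eq0 (lt_eqF Hb).
  - rewrite !coef_pol P20 P21 P22.
    rewrite [X in 0 <= X](_ : _ = b ^+ 2 * ((b - 1) ^+ 2 + 4 * a * b)); last by ring.
    by apply: mulr_ge0 => //; apply: sqr_ge0.
rewrite pol_rec ?(lt_eqF Hb) //.
apply: RR_scale; first by rewrite oppr_eq0 (lt_eqF Hb).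
apply: step_RR => //.
have : a - (m.+2)%:R <= 0.
  rewrite -[m.+2]addn2 natrD. have := ler0n RC m. lra.
move=> h.
have -> : (a - (m.+2)%:R) / b = (- (a - (m.+2)%:R)) / (- b) by rewrite invrN mulrNN.
apply: mulr_ge0; first by rewrite oppr_ge0.
by rewrite invr_ge0 oppr_ge0 ltW.
Qed.

Lemma pol0 a b : pol a b 0 = 1.
Proof.
apply/polyP => k; rewrite coef_pol coef1.
case: k => [|k] /=; first exact: P_00.
by rewrite P_vanish //; apply/ssrnat.ltP.
Qed.

Lemma part2 a b N : 0 < b -> (forall m, (m < N)%N -> m%:R < a) ->
  forall n, (n <= N)%N -> RR (pol a b n).
Proof.
move=> Hb HN; elim => [|n IH] Hn; first by rewrite pol0; exact: RR_1.
rewrite pol_rec ?(gt_eqF Hb) //.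
apply: RR_scale; first by rewrite oppr_eq0 (gt_eqF Hb).
apply: step_RR; first exact: IH (ltnW Hn).
apply: divr_ge0; last exact: ltW.
have := HN n Hn. lra.
Qed.

Local Close Scope complex_scope.
Local Close Scope ring_scope.
Local Open Scope R_scope.

Theorem theorem3 :
  (forall alpha beta : R,
     (beta - 1) ^ 2 + 4 * alpha * beta >= 0 -> beta < 0 -> alpha <= 2 ->
     forall n : nat, (1 <= n)%coq_nat -> P_only_real_zeros alpha beta n)
  /\
  (forall alpha beta : R,
     beta > 0 -> alpha >= 1 ->
     forall n : nat, (1 <= n)%coq_nat -> Z.le (Z.of_nat n) (Rceil alpha) ->
       P_only_real_zeros alpha beta n).
Proof.
split.
- intros a b Hd Hb Ha n Hn. apply RR_only_real. apply part1.
  + apply/RleP. apply Rge_le in Hd. rewrite !RealsE in Hd. exact Hd.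
  + apply/RltP. exact Hb.
  + apply/RleP. move: Ha; rewrite !RealsE; exact.
  + apply/ssrnat.leP. exact Hn.
- intros a b Hb Ha n Hn HN. apply RR_only_real.
  apply: (@part2 a b n); last exact: leqnn.
  + apply/RltP. exact Hb.
  + move=> m Hm. apply/RltP. rewrite -INRE. apply: (Rceil_bound a n HN). exact/ssrnat.ltP.
Qed.
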